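(* There is a constant $C$ such that for every complex $M\times N$ matrix $A=(a_{jk})$, $$h(A)\le C\sup_{1\le j\le M}\sum_{k=0}^N|a_{jk}-a_{j,k+1}|,$$ where one sets $a_{j0}=a_{j,N+1}=0$ for all $1\le j\le M$.
   Context: Let $(\Omega,\Sigma,\mathbb P)$ be a probability space with a dyadic filtration $(\Sigma_k)_{k\ge0}$ (increasing sub-$\sigma$-algebras, each $\Sigma_k$ atomic with exactly $2^k$ atoms of probability $2^{-k}$); $\mathcal E_kf=\mathbb E(f\mid\Sigma_k)$, $\Delta_kf=\mathcal E_kf-\mathcal E_{k-1}f$ ($k\ge1$). For a complex $M\times N$ matrix $A=(a_{jk})$, $h(A)$ is the least constant such that $\big\|\max_{1\le j\le M}|\sum_{k=1}^N a_{jk}\Delta_kf|\big\|_{L_2}\le h(A)\|f\|_{L_2}$ for all $f\in L_2(\Omega)$; it does not depend on the choice of probability space and dyadic filtration. *)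

(* Defs.v *)
From mathcomp Require Import all_boot all_order all_algebra.
From mathcomp Require Import reals complex.
Set Implicit Arguments. Unset Strict Implicit. Unset Printing Implicit Defensive.
Import Order.TTheory GRing.Theory Num.Theory.
Local Open Scope ring_scope.

Section Dyadic.
Variable R : realType.
Local Notation C := R[i].

(* Model of the dyadic filtration: Omega = {0,..,2^n-1} with uniform probability
   2^-n; for k <= n, Sigma_k is generated by the 2^k blocks
   {i | i %/ 2^(n-k) = c}, each of probability 2^-k. *)

Definition condexp (n k : nat) (f : 'I_(2 ^ n) -> C) (i : 'I_(2 ^ n)) : C :=
  ((2 ^ (n - k))%N%:R)^-1 *
  \sum_(i' : 'I_(2 ^ n) | (i' %/ 2 ^ (n - k) == i %/ 2 ^ (n - k))%N) f i'.

Definition mdiff (n k : nat) (f : 'I_(2 ^ n) -> C) (i : 'I_(2 ^ n)) : C :=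
  @condexp n k f i - @condexp n k.-1 f i.

Definition l2norm (n : nat) (g : 'I_(2 ^ n) -> R) : R :=
  Num.sqrt (((2 ^ n)%N%:R)^-1 * \sum_(i : 'I_(2 ^ n)) g i ^+ 2).

Definition cabs (z : C) : R := Normc.normc z.

(* omega |-> max_{1<=j<=M} | sum_{k=1}^N a_{jk} Delta_k f (omega) |;
   column index k' : 'I_N stands for k = k'+1 *)
Definition maxfun (n M N : nat) (A : 'M[C]_(M, N)) (f : 'I_(2 ^ n) -> C)
    (i : 'I_(2 ^ n)) : R :=
  \big[Num.max/0]_(j < M) cabs (\sum_(k < N) A j k * @mdiff n k.+1 f i).

(* a_{jk} for k in nat, with a_{j0} = a_{j,N+1} = 0 (and 0 beyond) *)
Definition aext (M N : nat) (A : 'M[C]_(M, N)) (j : 'I_M) (k : nat) : C :=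
  if (0 < k)%N then
    (if (insub k.-1 : option 'I_N) is Some kk then A j kk else 0)
  else 0.

Definition rowvar (M N : nat) (A : 'M[C]_(M, N)) : R :=
  \big[Num.max/0]_(j < M) \sum_(k < N.+1) cabs (aext A j k - aext A j k.+1).

End Dyadic.

(* Main.v *)
Require Import Defs.
From mathcomp Require Import all_boot all_order all_algebra.
From mathcomp Require Import reals complex.
From mathcomp Require Import ring lra.
Set Implicit Arguments. Unset Strict Implicit. Unset Printing Implicit Defensive.
Import Order.TTheory GRing.Theory Num.Theory.
Local Open Scope ring_scope.
Section Mart.
Variable R : realType.
Variable n : nat.
Local Notation I := ('I_(2 ^ n)).

Definition dd (k : nat) : nat := (2 ^ (n - k))%N.

Lemma dd_gt0 k : (0 < dd k)%N.
Proof. by rewrite /dd expn_gt0. Qed.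

Definition Er (k : nat) (g : I -> R) (i : I) : R :=
  (dd k)%:R^-1 * \sum_(i' : I | (i' %/ dd k == i %/ dd k)%N) g i'.

Definition meas (k : nat) (phi : I -> R) :=
  forall i i' : I, (i %/ dd k = i' %/ dd k)%N -> phi i = phi i'.

Lemma count_block k (c : nat) : (k <= n)%N -> (c < 2 ^ k)%N ->
  \sum_(i : I | (i %/ dd k == c)%N) (1 : R) = (dd k)%:R.
Proof.
move=> kn ck.
have e : (2 ^ n = 2 ^ k * dd k)%N by rewrite /dd -expnD subnKC.
rewrite big_mkcond /=.
rewrite -(big_mkord xpredT (fun j => if (j %/ dd k == c)%N then (1:R) else 0)).
rewrite e big_nat_mul.
rewrite (eq_bigr (fun q => if (q == c)%N then (dd k)%:R else 0)); last first.
  move=> q _.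
  rewrite (eq_big_nat _ _ (F2 := fun _ => if (q == c)%N then (1:R) else 0)).
    rewrite sumr_const_nat -mulnBl subSnn mul1n.
    by case: (q == c); rewrite ?mul0rn.
  move=> j /andP [h1 h2].
  have -> : (j %/ dd k = q)%N.
    have -> : j = (q * dd k + (j - q * dd k))%N by rewrite subnKC.
    rewrite divnMDl ?dd_gt0 // divn_small ?addn0 //.
    rewrite ltn_subLR //. by rewrite addnC -mulSn.
  by [].
rewrite big_mkord (bigD1 (Ordinal ck)) //= eqxx big1 ?addr0 //.
move=> q; rewrite -val_eqE /= => /negbTE ->. by [].
Qed.

Lemma tower k (phi h : I -> R) : (k <= n)%N -> meas k phi ->
  \sum_(i : I) phi i * Er k h i = \sum_(i : I) phi i * h i.
Proof.
move=> kn mp.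
rewrite /Er.
transitivity ((dd k)%:R^-1 * \sum_(i : I) \sum_(i' : I | (i' %/ dd k == i %/ dd k)%N) phi i' * h i').
  rewrite mulr_sumr; apply: eq_bigr => i _.
  rewrite mulrCA mulr_sumr; congr (_ * _); apply: eq_bigr => i' /eqP e.
  by rewrite (mp i i').
rewrite (exchange_big_dep xpredT) //=.
rewrite mulr_sumr; apply: eq_bigr => i' _.
rewrite (eq_bigl (fun i : I => (i %/ dd k == i' %/ dd k)%N)); last by move=> i; rewrite eq_sym.
rewrite (eq_bigr (fun _ => phi i' * h i' * 1)); last by move=> *; rewrite mulr1.
rewrite -mulr_sumr count_block //.
  by rewrite [_ * (dd k)%:R]mulrC mulrA mulVf ?mul1r // pnatr_eq0 -lt0n dd_gt0.
have := ltn_divLR i' (2 ^ k) (dd_gt0 k).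
rewrite /dd -expnD subnKC // => ->. exact: ltn_ord.
Qed.

Lemma meas_Er k h : meas k (Er k h).
Proof. by move=> i i' e; rewrite /Er e. Qed.

Lemma meas_mono j k phi : (j <= k)%N -> (k <= n)%N -> meas j phi -> meas k phi.
Proof.
move=> jk kn mp i i' e; apply: mp.
have -> : dd j = (dd k * 2 ^ (k - j))%N.
  by rewrite /dd -expnD addnBA // subnK.
by rewrite !divnMA e.
Qed.

Lemma meas_max k phi psi : meas k phi -> meas k psi ->
  meas k (fun i => Num.max (phi i) (psi i)).
Proof. by move=> m1 m2 i i' e; rewrite (m1 i i' e) (m2 i i' e). Qed.

Variable g : I -> R.
Hypothesis g_ge0 : forall i, 0 <= g i.

Definition X k := Er k g.

Fixpoint xb (k : nat) (i : I) : R :=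
  if k is k'.+1 then Num.max (xb k' i) (X k'.+1 i) else X 0 i.

Lemma meas_xb k : (k <= n)%N -> meas k (xb k).
Proof.
elim: k => [|k IH] kn /=; first exact: meas_Er.
apply: meas_max; last exact: meas_Er.
apply: (meas_mono (j := k)) => //; apply: IH; exact: ltnW.
Qed.

Lemma X_ge0 k i : 0 <= X k i.
Proof.
rewrite /X /Er mulr_ge0 ?invr_ge0 ?ler0n //.
by apply: sumr_ge0 => *.
Qed.

Lemma X_le_xb k N i : (k <= N)%N -> X k i <= xb N i.
Proof.
elim: N => [|N IH]; first by rewrite leqn0 => /eqP ->.
rewrite leq_eqVlt => /orP [/eqP -> | kN] /=; first by rewrite le_max lexx orbT.
by rewrite le_max IH.
Qed.

Lemma xb_ge0 N i : 0 <= xb N i.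
Proof. apply: (le_trans (X_ge0 0 i)); exact: X_le_xb. Qed.

Definition S N i := \sum_(k < N) xb k i * (X k.+1 i - X k i).

Lemma pathwise N i : S N i + xb N i ^+ 2 / 2 <= xb N i * X N i.
Proof.
elim: N => [|N IH].
  rewrite /S big_ord0 /=. have := X_ge0 0 i. nra.
rewrite /S big_ord_recr /= -/(S N i).
move: IH; set a := xb N i; set b := X N.+1 i; set x := X N i; set s := S N i.
move=> IH.
case: (lerP a b) => ab; nra.
Qed.


Lemma sumS N : (N <= n)%N -> \sum_(i : I) S N i = 0.
Proof.
move=> Nn; rewrite /S exchange_big /= big1 // => k _.
have k1 : (k.+1 <= n)%N by apply: leq_trans (ltn_ord k) Nn.
have mk : meas k (xb k) by apply: meas_xb; exact: ltnW.
rewrite (eq_bigr (fun i => xb k i * X k.+1 i - xb k i * X k i)); last by move=> i _; rewrite mulrBr.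
rewrite sumrB /X (@tower k.+1) //; last by apply: (meas_mono (j := k)).
by rewrite (@tower k) ?subrr //; exact: ltnW.
Qed.

Lemma jensen k : (k <= n)%N -> \sum_(i : I) X k i ^+ 2 <= \sum_(i : I) g i ^+ 2.
Proof.
move=> kn.
have e : \sum_(i : I) X k i ^+ 2 = \sum_(i : I) X k i * g i.
  rewrite -(@tower k) //; last exact: meas_Er.
have h : \sum_(i : I) X k i * g i <= \sum_(i : I) ((X k i ^+ 2 + g i ^+ 2) / 2).
  apply: ler_sum => i _. move: (X k i) (g i) => a b. have := sqr_ge0 (a - b). nra. idtac "OK1".
rewrite -mulr_suml big_split /= -e in h.
lra.
Qed.

Lemma doob N : (N <= n)%N -> \sum_(i : I) xb N i ^+ 2 <= 4 * \sum_(i : I) g i ^+ 2.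
Proof.
move=> Nn.
have h : \sum_(i : I) xb N i ^+ 2 <= \sum_(i : I) (4 * X N i ^+ 2 - 4 * S N i).
  apply: ler_sum => i _. have := pathwise N i. move: (xb N i) (X N i) (S N i) => a b c. have := sqr_ge0 (a - 2 * b). nra.
rewrite sumrB -!mulr_sumr sumS // mulr0 subr0 in h.
apply: (le_trans h). apply: ler_wpM2l; first lra. exact: jensen.
Qed.

End Mart.
Section Cx.
Variable R : realType.

Lemma cabs_ge0 (z : R[i]) : 0 <= cabs z.
Proof. by case: z => a b; rewrite /cabs /= sqrtr_ge0. Qed.

Lemma cabsD (x y : R[i]) : cabs (x + y) <= cabs x + cabs y.
Proof. exact: le_normcD. Qed.

Lemma cabsM (x y : R[i]) : cabs (x * y) = cabs x * cabs y.
Proof. exact: Normc.normcM. Qed.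

Lemma cabs_sum (J : Type) (r : seq J) (P : pred J) (F : J -> R[i]) :
  cabs (\sum_(j <- r | P j) F j) <= \sum_(j <- r | P j) cabs (F j).
Proof.
apply: (big_ind2 (fun x y => cabs x <= y)).
- by rewrite /cabs Normc.normc0.
- move=> x1 x2 y1 y2 h1 h2; apply: le_trans (cabsD _ _) _; exact: lerD.
- by [].
Qed.

Lemma cabs_natinv (d : nat) : cabs ((d%:R : R[i])^-1) = (d%:R)^-1.
Proof.
rewrite /cabs Normc.normcV; congr (_^-1).
have := @normcMn R 1 d. rewrite Normc.normc1 => <-. by [].
Qed.

Lemma cabs_condexp n k (f : 'I_(2 ^ n) -> R[i]) i :
  cabs (condexp k f i) <= Er k (fun w => cabs (f w)) i.
Proof.
rewrite /condexp /Er cabsM cabs_natinv.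
apply: ler_wpM2l; first by rewrite invr_ge0 ler0n.
exact: cabs_sum.
Qed.

Lemma sumparts (a e : nat -> R[i]) N :
  \sum_(k < N.+1) (a k - a k.+1) * e k =
  \sum_(k < N) a k.+1 * (e k.+1 - e k) + a 0%N * e 0%N - a N.+1 * e N.
Proof.
elim: N => [|N IH].
  by rewrite big_ord1 big_ord0 add0r mulrBl.
rewrite big_ord_recr /= IH big_ord_recr /=.
rewrite mulrBl mulrBr. 
set s := \sum_(i < N) _. 
ring.
Qed.

End Cx.
Section Main.
Variable R : realType.

Lemma aextN M N (A : 'M[R[i]]_(M, N)) j : aext A j N.+1 = 0.
Proof. by rewrite /aext /=; case: insubP => // kk; rewrite ltnn. Qed.

Lemma aextS M N (A : 'M[R[i]]_(M, N)) j (k : 'I_N) : aext A j k.+1 = A j k.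
Proof.
rewrite /aext /=; case: insubP => [kk _ /val_inj -> //|].
by rewrite ltn_ord.
Qed.

Lemma rowvar_ge0 M N (A : 'M[R[i]]_(M, N)) : 0 <= rowvar A.
Proof.
rewrite /rowvar; apply: (big_ind (fun y : R => 0 <= y)) => //.
by move=> x y hx hy; rewrite le_max hx.
move=> j _; apply: sumr_ge0 => k _; exact: cabs_ge0.
Qed.

Lemma maxfun_ge0 n M N (A : 'M[R[i]]_(M, N)) (f : 'I_(2 ^ n) -> R[i]) i :
  0 <= maxfun A f i.
Proof.
rewrite /maxfun; apply: (big_ind (fun y : R => 0 <= y)) => //.
  by move=> x y hx hy; rewrite le_max hx.
move=> j _; exact: cabs_ge0.
Qed.

Lemma pointwise n M N (A : 'M[R[i]]_(M, N)) (f : 'I_(2 ^ n) -> R[i]) i :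
  maxfun A f i <= rowvar A * xb (fun w => cabs (f w)) N i.
Proof.
have xb0 := xb_ge0 (fun w => cabs_ge0 (f w)) N i.
rewrite /maxfun; apply: (big_ind (fun y : R => y <= rowvar A * xb (fun w => cabs (f w)) N i)).
- by apply: mulr_ge0 => //; exact: rowvar_ge0.
- by move=> x y hx hy; rewrite ge_max hx hy.
move=> j _.
rewrite (eq_bigr (fun k : 'I_N => aext A j k.+1 * (condexp k.+1 f i - condexp k f i))); last first.
  by move=> k _; rewrite aextS.
have := sumparts (aext A j) (fun k => condexp k f i) N.
rewrite aextN (_ : aext A j 0 = 0) // !mul0r addr0 subr0 => <-.
apply: le_trans (cabs_sum _ _ _) _.
apply: (@le_trans _ _ (\sum_(k < N.+1) cabs (aext A j k - aext A j k.+1) * xb (fun w => cabs (f w)) N i)).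
  apply: ler_sum => k _; rewrite cabsM; apply: ler_wpM2l; first exact: cabs_ge0.
  apply: le_trans (cabs_condexp _ _ _) _.
  apply: X_le_xb. by rewrite -ltnS.
rewrite -mulr_suml; apply: ler_wpM2r => //.
by rewrite /rowvar (bigD1 j) //= le_max lexx.
Qed.

End Main.
Unset Implicit Arguments.
Theorem proposition3p1 (R : realType) :
  exists Cst : R,
    forall (M N n : nat) (A : 'M[R[i]]_(M, N)) (f : 'I_(2 ^ n) -> R[i]),
      (N <= n)%N ->
      l2norm (maxfun A f) <= Cst * rowvar A * l2norm (fun w => cabs (f w)).
Proof.
exists 2 => M N n A f Nn.
set g := fun w => cabs (f w).
have rv0 := rowvar_ge0 A.
have hsum : \sum_(i : 'I_(2 ^ n)) maxfun A f i ^+ 2 <=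
            rowvar A ^+ 2 * (4 * \sum_(i : 'I_(2 ^ n)) g i ^+ 2).
  apply: (@le_trans _ _ (\sum_(i : 'I_(2 ^ n)) (rowvar A * xb g N i) ^+ 2)).
    apply: ler_sum => i _.
    have := pointwise A f i; have := maxfun_ge0 A f i.
    move: (maxfun A f i) (rowvar A * xb g N i) => a b. nra.
  rewrite (eq_bigr (fun i => rowvar A ^+ 2 * xb g N i ^+ 2)); last by move=> i _; rewrite exprMn.
  rewrite -mulr_sumr; apply: ler_wpM2l; first exact: sqr_ge0.
  apply: doob => //; move=> w; exact: cabs_ge0.
rewrite /l2norm -/g.
set P := (((2 ^ n)%N)%:R : R)^-1.
have P0 : 0 <= P by rewrite /P invr_ge0 ler0n.
rewrite -[2 * rowvar A]ger0_norm ?mulr_ge0 // -sqrtr_sqr -sqrtrM ?sqr_ge0 //.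
apply: ler_wsqrtr.
have := ler_wpM2l P0 hsum.
move: (\sum_(i < 2 ^ n) maxfun A f i ^+ 2) (\sum_(i < 2 ^ n) g i ^+ 2) => a b h.
have -> : (2 * rowvar A) ^+ 2 * (P * b) = P * (rowvar A ^+ 2 * (4 * b)) by ring.
exact: h.
Qed.
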